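(* Let $\Gamma$ be a finite connected graph with $m$ edges and genus $g\ge1$, $B\in\mathbb Z^{g\times m}$ with rows a $\mathbb Z$-basis of $H_1(\Gamma,\mathbb Z)\subset\mathbb Z^m$, and $Q=BB^T$. Let $\mathbf a$ be a vertex of $V_Q$ and $[\mathbf a]$ its equivalence class. Then the convex hull of $[\mathbf a]$ equals $\mathbf a-D_{\mathbf a,Q}=\{\mathbf a-\mathbf x:\mathbf x\in D_{\mathbf a,Q}\}$, and $|[\mathbf a]|=|\mathcal D_{\mathbf a,Q}|$.
   Context: Edge lengths are all $1$, so $Q=BB^T$. $V_Q=\{\mathbf a\in\mathbb R^g:\ \mathbf a^TQ\mathbf a\le(\mathbf a-\mathbf c)^TQ(\mathbf a-\mathbf c)\ \forall\mathbf c\in\mathbb Z^g\}$. For a vertex $\mathbf a$ of $V_Q$, $\mathcal D_{\mathbf a,Q}=\{\mathbf c\in\mathbb Z^g:\ \mathbf a^TQ\mathbf a=(\mathbf a-\mathbf c)^TQ(\mathbf a-\mathbf c)\}$ and $D_{\mathbf a,Q}$ is its convex hull. On the vertex set of $V_Q$, $\mathbf a\sim\mathbf a'$ iff $\mathbf a'=\mathbf a-\mathbf c_0$ for some $\mathbf c_0\in\mathcal D_{\mathbf a,Q}$ (an equivalence relation); $[\mathbf a]$ denotes the class of $\mathbf a$. *)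

(* Defs.v *)
From HB Require Import structures.
From mathcomp Require Import all_boot all_order all_algebra.
From mathcomp Require Import boolp classical_sets cardinality reals.
Set Implicit Arguments.
Unset Strict Implicit.
Unset Printing Implicit Defensive.
Import Order.TTheory GRing.Theory Num.Theory.
Local Open Scope ring_scope.
Local Open Scope classical_set_scope.

(* A finite (multi)graph with vertex set 'I_n and edge set 'I_m; each edge e
   is given an (arbitrary) orientation from [src e] to [tgt e]. Loops and
   multiple edges are allowed. *)
Definition gadj (n m : nat) (src tgt : 'I_m -> 'I_n) : rel 'I_n :=
  fun u v => [exists e : 'I_m,
     ((src e == u) && (tgt e == v)) || ((tgt e == u) && (src e == v))].

Definition graph_connected (n m : nat) (src tgt : 'I_m -> 'I_n) : Prop :=
  forall u v : 'I_n, connect (gadj src tgt) u v.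

Definition boundary (n m : nat) (src tgt : 'I_m -> 'I_n) (x : 'rV[int]_m)
  : 'rV[int]_n :=
  \row_(v < n) \sum_(e < m)
     x 0 e * (((tgt e == v) : int) - ((src e == v) : int)).

Definition in_H1 (n m : nat) (src tgt : 'I_m -> 'I_n) (x : 'rV[int]_m) : Prop :=
  boundary src tgt x = 0.

Definition rows_Zbasis_H1 (n m g : nat) (src tgt : 'I_m -> 'I_n)
  (B : 'M[int]_(g, m)) : Prop :=
  (forall i : 'I_g, in_H1 src tgt (row i B)) /\
  (forall x : 'rV[int]_m, in_H1 src tgt x ->
     exists! c : 'rV[int]_g, x = c *m B).

Section Voronoi.
Variables (R : realType) (g : nat).

Definition intvec (c : 'rV[int]_g) : 'rV[R]_g := map_mx (fun z : int => z%:~R) c.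

Definition Qreal (m : nat) (B : 'M[int]_(g, m)) : 'M[R]_g :=
  map_mx (fun z : int => z%:~R) (B *m B^T).

(* quadratic form a^T Q a (points are row vectors) *)
Definition qform (Q : 'M[R]_g) (a : 'rV[R]_g) : R := (a *m Q *m a^T) 0 0.

Definition VQ (Q : 'M[R]_g) : set 'rV[R]_g :=
  [set a | forall c : 'rV[int]_g, qform Q a <= qform Q (a - intvec c)].

Definition is_vertex (Q : 'M[R]_g) (a : 'rV[R]_g) : Prop :=
  VQ Q a /\
  forall (x y : 'rV[R]_g) (t : R), VQ Q x -> VQ Q y -> 0 < t < 1 ->
    a = t *: x + (1 - t) *: y -> x = y.

Definition Dset (Q : 'M[R]_g) (a : 'rV[R]_g) : set 'rV[int]_g :=
  [set c | qform Q a = qform Q (a - intvec c)].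

Definition vclass (Q : 'M[R]_g) (a : 'rV[R]_g) : set 'rV[R]_g :=
  [set a' | is_vertex Q a' /\ exists2 c, Dset Q a c & a' = a - intvec c].

Definition convhull (A : set 'rV[R]_g) : set 'rV[R]_g :=
  [set x | exists (k : nat) (p : 'I_k -> 'rV[R]_g) (w : 'I_k -> R),
     [/\ forall i, A (p i), forall i, 0 <= w i, \sum_(i < k) w i = 1
       & x = \sum_(i < k) w i *: p i]].

End Voronoi.

(* Main.v *)
Require Import Defs.
From HB Require Import structures.
From mathcomp Require Import all_boot all_order all_algebra.
From mathcomp Require Import boolp classical_sets cardinality reals.
From mathcomp Require Import lra.
Import Order.TTheory GRing.Theory Num.Theory.
Local Open Scope ring_scope.
Local Open Scope classical_set_scope.
Local Open Scope card_scope.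

Section Aux.
Variables (R : realType) (g : nat).
Implicit Types (Q : 'M[R]_g) (u v w : 'rV[R]_g).

Definition bf Q u v : R := (u *m Q *m v^T) 0 0.

Lemma qformE Q u : qform Q u = bf Q u u. Proof. by []. Qed.
Lemma bfDl Q u u' v : bf Q (u + u') v = bf Q u v + bf Q u' v.
Proof. by rewrite /bf !mulmxDl mxE. Qed.
Lemma bfDr Q u v v' : bf Q u (v + v') = bf Q u v + bf Q u v'.
Proof. by rewrite /bf linearD /= mulmxDr mxE. Qed.
Lemma bfZl Q k u v : bf Q (k *: u) v = k * bf Q u v.
Proof. by rewrite /bf -!scalemxAl mxE. Qed.
Lemma bfZr Q k u v : bf Q u (k *: v) = k * bf Q u v.
Proof. by rewrite /bf linearZ /= -scalemxAr mxE. Qed.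
Lemma bfNl Q u v : bf Q (- u) v = - bf Q u v.
Proof. by rewrite -scaleN1r bfZl mulN1r. Qed.
Lemma bfNr Q u v : bf Q u (- v) = - bf Q u v.
Proof. by rewrite -scaleN1r bfZr mulN1r. Qed.

Lemma intvecD (c c' : 'rV[int]_g) :
  intvec R (c + c') = intvec R c + intvec R c'.
Proof. by apply/matrixP => i j; rewrite !mxE intrD. Qed.
Lemma intvecN (c : 'rV[int]_g) : intvec R (- c) = - intvec R c.
Proof. by apply/matrixP => i j; rewrite !mxE intrN. Qed.
Lemma intvec_inj : injective (@intvec R g).
Proof.
move=> c c' /matrixP H; apply/matrixP => i j.
by have := H i j; rewrite !mxE => /intr_inj.
Qed.

Lemma qform_add Q u v :
  qform Q (u + v) = qform Q u + (bf Q u v + bf Q v u + bf Q v v).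
Proof. rewrite !qformE !bfDl !bfDr; lra. Qed.

Lemma translate_vertex Q a c :
  is_vertex Q a -> Dset Q a c -> is_vertex Q (a - intvec R c).
Proof.
move=> [Va Hv] Dc; set v := intvec R c.
have Dc' : qform Q a = qform Q (a - v) := Dc.
split.
  move=> c'; rewrite -Dc' -addrA -opprD -intvecD; exact: Va.
move=> x y t Vx Vy /andP[t0 t1] E.
have Sx : 0 <= bf Q x v + bf Q v x + bf Q v v.
  have := Vx (- c); rewrite intvecN opprK qform_add; lra.
have Sy : 0 <= bf Q y v + bf Q v y + bf Q v v.
  have := Vy (- c); rewrite intvecN opprK qform_add; lra.
have H0 : bf Q (a - v) v + bf Q v (a - v) + bf Q v v = 0.
  have := qform_add Q (a - v) v; rewrite subrK -Dc'; lra.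
move: H0; rewrite E !bfDl !bfDr !bfZl !bfZr => H0.
have Ex : bf Q x v + bf Q v x + bf Q v v = 0 by nra.
have Ey : bf Q y v + bf Q v y + bf Q v v = 0 by nra.
have VQv z : VQ Q z -> bf Q z v + bf Q v z + bf Q v v = 0 -> VQ Q (z + v).
  move=> Vz Ez c'; rewrite qform_add Ez addr0.
  have := Vz (c' - c); rewrite intvecD intvecN opprD opprK addrA.
  by rewrite [_ - _ + v]addrAC.
apply: (addIr v); apply: (Hv _ _ t (VQv _ Vx Ex) (VQv _ Vy Ey)).
  by rewrite t0 t1.
rewrite !scalerDr addrACA -E -scalerDl [t + _]addrC subrK scale1r subrK //.
Qed.

End Aux.

Theorem corollary2p5 (R : realType) (n m g : nat) (src tgt : 'I_m -> 'I_n)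
  (B : 'M[int]_(g, m)) (a : 'rV[R]_g) :
  graph_connected src tgt ->
  (1 <= g)%N ->
  rows_Zbasis_H1 src tgt B ->
  is_vertex (Qreal R B) a ->
  convhull (vclass (Qreal R B) a)
    = [set a - x | x in convhull (@intvec R g @` Dset (Qreal R B) a)]
  /\ (vclass (Qreal R B) a #= Dset (Qreal R B) a).
Proof.
move=> _ _ _ Va; set Q := Qreal R B.
have EV : vclass Q a = (fun c => a - intvec R c) @` Dset Q a.
  apply/seteqP; split => x.
    by move=> [_ [c Dc ->]]; exists c.
  move=> [c Dc <-]; split; last by exists c.
  exact: translate_vertex.
split; last first.
  rewrite EV; apply: inj_card_eq => c c' _ _ /= /addrI /oppr_inj.
  exact: intvec_inj.
apply/seteqP; split => x.
  move=> [k [p [w [Hp Hw Hs ->]]]].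
  exists (\sum_(i < k) w i *: (a - p i)).
    exists k, (fun i => a - p i), w; split => //.
    move=> i; rewrite EV in Hp; have [c Dc <-] := Hp i.
    by exists c => //; rewrite opprB addrC subrK.
  under eq_bigr => i _ do rewrite scalerBr.
  rewrite sumrB -scaler_suml Hs scale1r opprB addrC subrK //.
move=> [y [k [q [w [Hq Hw Hs ->]]]] <-].
exists k, (fun i => a - q i), w; split => //.
  move=> i; have [c Dc <-] := Hq i; split; last by exists c.
  exact: translate_vertex.
apply/esym; under eq_bigr => i _ do rewrite scalerBr.
by rewrite sumrB -scaler_suml Hs scale1r.
Qed.
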